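(* Let $I\subseteq\mathfrak{M}$ be an ideal of $P$ and let $\mathrm{GFan}(I)=\{\overline G_1,\dots,\overline G_k\}$. (a) For $i=1,\dots,k$, $\mathrm{sepdim}(P/I)\le n-\#\mathrm{LI}(\overline G_i)$. (b) For $i\in\{1,\dots,k\}$, $\mathrm{sepdim}(P/I)=n-\#\mathrm{LI}(\overline G_i)$ if and only if $\#\mathrm{LI}(\overline G_i)=\max_{1\le j\le k}\#\mathrm{LI}(\overline G_j)$. (c) For $i$ such that $\#\mathrm{LI}(\overline G_i)$ is maximal, the $\mathrm{LI}(\overline G_i)$-separating re-embedding $\Phi:P/I\to\widehat P/(I\cap\widehat P)$ (with $\widehat P=K[X\setminus\mathrm{LI}(\overline G_i)]$) is an optimal separating re-embedding.
   Context: $K$ is a field, $P=K[x_1,\dots,x_n]$, $X=\{x_1,\dots,x_n\}$, $\mathfrak{M}=\langle x_1,\dots,x_n\rangle$. For $f\in P$, $\mathrm{indets}(f)$ is the set of indeterminates dividing some term in the support of $f$. For $f\in\mathfrak{M}$ with nonzero degree-one part, $z$ an indeterminate occurring in that degree-one part, and $c\ne0$ the coefficient of $z$ in $f$, $\mathrm{tail}_z(f)=z-\frac1cf$; $f$ is $z$-separating if $z\notin\mathrm{indets}(\mathrm{tail}_z(f))$. For distinct indeterminates $Z=\{z_1,\dots,z_s\}$, a tuple $(f_1,\dots,f_s)$ of nonzero elements of $\mathfrak{M}$ is coherently $Z$-separating if each $f_i$ is $z_i$-separating and $z_i\notin\mathrm{indets}(f_j)$ for $j\neq i$. If $I$ contains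 such a tuple, the $Z$-separating re-embedding is the $K$-algebra isomorphism $\Phi:P/I\to\widehat P/(I\cap\widehat P)$, $\widehat P=K[X\setminus Z]$, induced by $x\mapsto x$ for $x\notin Z$ and $z_i\mapsto\mathrm{tail}_{z_i}(f_i)$ (it does not depend on the choice of the tuple). It is an optimal separating re-embedding if $\#Z'\le\#Z$ for every $Z'\subseteq X$ such that $I$ contains a coherently $Z'$-separating tuple; the separating embedding dimension is then $\mathrm{sepdim}(P/I)=n-\#Z$. A marked reduced Gröbner basis of $I$ is the set of pairs $\{(\mathrm{LT}_\sigma(g),g)\mid g\in G\}$ for $G$ the reduced $\sigma$-Gröbner basis of $I$ for some term ordering $\sigma$; $\mathrm{GFan}(I)$ is the set of all distinct marked reduced Gröbner bases of $I$; for $\overline G\in\mathrm{GFan}(I)$, $\mathrm{LI}(\overline G)$ is the set of indeterminates $z\in X$ that occur as a marked leading term of some element of $\overline G$. *)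

(* Defs.v *)
From HB Require Import structures.
From mathcomp Require Import all_boot all_order all_algebra.
From mathcomp Require Import finmap.
From mathcomp Require Import mpoly.
From mathcomp Require Import boolp.

Set Implicit Arguments.
Unset Strict Implicit.
Unset Printing Implicit Defensive.

Import GRing.Theory.
Local Open Scope ring_scope.


Section Defs.
Variables (K : fieldType) (n : nat).
Local Notation P := {mpoly K[n]}.
Local Notation mon := 'X_{1..n}.

Definition is_ideal (I : P -> Prop) : Prop :=
  [/\ I 0,
      (forall f g, I f -> I g -> I (f + g)) &
      (forall h f, I f -> I (h * f))].

(** The maximal ideal M = <x_1,...,x_n>: zero constant coefficient. *)
Definition inM (f : P) : Prop := f@_(0%MM) = 0.

Definition indets (f : P) : {set 'I_n} :=
  [set j : 'I_n | `[< exists2 m, m \in msupp f & (0 < m j)%N >]].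

Definition lincoef (z : 'I_n) (f : P) : K := f@_(U_(z)%MM).

Definition tail (z : 'I_n) (f : P) : P := 'X_z - (lincoef z f)^-1 *: f.

Definition separating (z : 'I_n) (f : P) : Prop :=
  [/\ inM f, lincoef z f != 0 & z \notin indets (tail z f)].

Definition coh_sep_tuple_in (I : P -> Prop) (Z : {set 'I_n}) (F : 'I_n -> P) :
    Prop :=
  forall z, z \in Z ->
    [/\ F z != 0, inM (F z), I (F z), separating z (F z) &
        forall z', z' \in Z -> z' != z -> z \notin indets (F z')].

Definition has_coh_sep (I : P -> Prop) (Z : {set 'I_n}) : Prop :=
  exists F : 'I_n -> P, coh_sep_tuple_in I Z F.

Definition optimal_sep (I : P -> Prop) (Z : {set 'I_n}) : Prop :=
  has_coh_sep I Z /\ (forall Z', has_coh_sep I Z' -> #|Z'| <= #|Z|)%N.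

Definition sepdim (I : P -> Prop) : nat :=
  (n - \max_(Z : {set 'I_n} | `[< has_coh_sep I Z >]) #|Z|)%N.

Definition term_ordering (sigma : rel mon) : Prop :=
  [/\ reflexive sigma, antisymmetric sigma, transitive sigma & total sigma] /\
  (forall m1 m2 m3, sigma m1 m2 -> sigma (m1 + m3)%MM (m2 + m3)%MM) /\
  (forall m, sigma 0%MM m).

Definition is_LT (sigma : rel mon) (f : P) (m : mon) : Prop :=
  m \in msupp f /\ (forall m', m' \in msupp f -> sigma m' m).

Definition reduced_GB (sigma : rel mon) (I : P -> Prop) (G : {fset P}) : Prop :=
  [/\ (forall g, g \in G -> I g /\ g != 0),
      (forall g, g \in G -> exists2 m, is_LT sigma g m & g@_m = 1),
      (forall f, I f -> f != 0 -> forall mf, is_LT sigma f mf ->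
          exists g, exists2 mg, g \in G /\ is_LT sigma g mg & (mg <= mf)%MM) &
      (forall g g', g \in G -> g' \in G -> g != g' -> forall mg',
          is_LT sigma g' mg' ->
          forall m, m \in msupp g -> ~~ (mg' <= m)%MM)].

Definition in_GFan (I : P -> Prop) (Gb : {fset (mon * P)}) : Prop :=
  exists sigma, term_ordering sigma /\
  exists G : {fset P}, reduced_GB sigma I G /\
    (forall p, p \in Gb <-> (p.2 \in G /\ is_LT sigma p.2 p.1)).

Definition LI (Gb : {fset (mon * P)}) : {set 'I_n} :=
  [set j : 'I_n | `[< exists2 p, p \in Gb & p.1 = U_(j)%MM >]].

Definition maxLI (I : P -> Prop) : nat :=
  \max_(S : {set 'I_n} | `[< exists Gb, in_GFan I Gb /\ LI Gb = S >]) #|S|.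

End Defs.

(* Main.v *)
Require Import Defs.
From HB Require Import structures.
From mathcomp Require Import all_boot all_order all_algebra.
From mathcomp Require Import finmap mpoly boolp.
From mathcomp Require Import zify.

Set Implicit Arguments.
Unset Strict Implicit.
Unset Printing Implicit Defensive.
Import Order.TTheory GRing.Theory.
Local Open Scope ring_scope.


Lemma extract_nondecr (v : nat -> nat) :
  exists phi : nat -> nat, (forall a, (phi a < phi a.+1)%N) /\
     (forall a, (v (phi a) <= v (phi a.+1))%N).
Proof.
have Hn : forall i, exists j, (i < j)%N /\ forall k, (i < k)%N -> (v j <= v k)%N.
  move=> i.
  have ex : exists val, `[< exists j, (i < j)%N /\ v j = val >].
    by exists (v i.+1); apply/asboolP; exists i.+1.
  case: (ex_minnP ex) => val /asboolP [j [ij vj]] Hmin.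
  exists j; split => // k ik; rewrite vj; apply: Hmin; apply/asboolP.
  by exists k.
have [nx Hnx] := choice Hn.
pose phi := fix f a := if a is a'.+1 then nx (f a') else nx 0%N.
exists phi; split => a.
  by case: (Hnx (phi a)).
have h1 : (phi a < phi a.+1)%N by case: (Hnx (phi a)).
case: a h1 => [|a] h1 /=.
  case: (Hnx 0%N) => h0 H; apply: H; exact: ltn_trans h0 h1.
case: (Hnx (phi a)) => h0 H; apply: H; exact: ltn_trans h0 h1.
Qed.

Lemma good_mon (n : nat) (u : nat -> 'X_{1..n}) :
  exists i j, (i < j)%N /\ (u i <= u j)%MM.
Proof.
have H : forall k, (k <= n)%N -> exists phi : nat -> nat,
    (forall a, (phi a < phi a.+1)%N) /\
    (forall a (c : 'I_n), (c < k)%N -> (u (phi a) c <= u (phi a.+1) c)%N).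
  elim => [|k IH] kn.
    by exists id; split => // a c.
  have [phi [Hp1 Hp2]] := IH (ltnW kn).
  pose c0 : 'I_n := Ordinal kn.
  have [psi [Hq1 Hq2]] := extract_nondecr (fun a => u (phi a) c0).
  exists (fun a => phi (psi a)); split => a.
    exact: (homo_ltn (r := fun x y => (x < y)%N) (f := phi) (@ltn_trans) Hp1).
  move=> c; rewrite ltnS leq_eqVlt => /orP [/eqP ck|ck].
    have -> : c = c0 by apply: val_inj.
    exact: Hq2.
  apply: (homo_leq (r := fun x y => (x <= y)%N) (f := fun a => u (phi a) c)
            (@leqnn) (@leq_trans)) => [i|]; first exact: Hp2.
  exact: ltnW.
have [phi [Hp1 Hp2]] := H n (leqnn n).
exists (phi 0%N), (phi 1%N); split; first exact: Hp1.
by apply/mnm_lepP => c; apply: Hp2.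
Qed.

Definition mmin (n : nat) (A : 'X_{1..n} -> Prop) (m : 'X_{1..n}) :=
  A m /\ forall m', A m' -> (m' <= m)%MM -> m' = m.

Lemma mmin_finite (n : nat) (A : 'X_{1..n} -> Prop) :
  exists s : seq 'X_{1..n}, forall m, mmin A m <-> m \in s.
Proof.
suff [s Hs] : exists s : seq 'X_{1..n}, forall m, mmin A m -> m \in s.
  exists [seq m <- s | `[< mmin A m >]] => m; rewrite mem_filter.
  split; first by move=> Hm; rewrite Hs // andbT; apply/asboolP.
  by case/andP => /asboolP.
apply: contrapT => Hn.
have Hp : forall s : seq 'X_{1..n}, exists m, mmin A m /\ m \notin s.
  move=> s; apply: contrapT => Hs; apply: Hn; exists s => m Hm.
  by apply: contrapT => /negP ms; apply: Hs; exists m.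
have [pk Hpk] := choice Hp.
pose S := fix S k := if k is k'.+1 then pk (S k') :: S k' else [::].
pose u k := pk (S k).
have Hin : forall i j, (i < j)%N -> u i \in S j.
  move=> i; elim => // j IH; rewrite ltnS leq_eqVlt => /orP [/eqP ->|ij] /=.
    by rewrite inE eqxx.
  by rewrite inE (IH ij) orbT.
have [i [j [ij Hu]]] := good_mon u.
have [[_ Hmj] Hnj] := Hpk (S j).
have [[Ai _] _] := Hpk (S i).
have := Hmj _ Ai Hu; rewrite /u => E.
by move: (Hin i j ij); rewrite /u E (negbTE Hnj).
Qed.

Lemma mmin_below (n : nat) (A : 'X_{1..n} -> Prop) m :
  A m -> exists m0, mmin A m0 /\ (m0 <= m)%MM.
Proof.
move: {2}(mdeg m) (leqnn (mdeg m)) => k; elim: k m => [|k IH] m hk Am.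
  exists m; split; last exact: lepm_refl.
  split => // m' _ /mnm_lepP Hle; apply/mnmP => i.
  move: hk; rewrite leqn0 mdeg_eq0 => /eqP E; move: (Hle i); rewrite E mnm0E.
  by rewrite leqn0 => /eqP.
have [Hmin|Hnm] := pselect (mmin A m).
  by exists m; split => //; exact: lepm_refl.
have [m' [Am' [lm' nm']]] : exists m', A m' /\ (m' <= m)%MM /\ m' <> m.
  apply: contrapT => Hn; apply: Hnm; split => // m' Am' lm'.
  by apply: contrapT => ne; apply: Hn; exists m'.
have Hd : (mdeg m' < mdeg m)%N.
  rewrite -(submK lm') mdegD -[X in (X < _)%N]add0n ltn_add2r lt0n mdeg_eq0.
  apply/eqP => E; apply: nm'; by rewrite -(submK lm') E add0m.
have [m0 [H0 l0]] := IH m' (leq_trans Hd hk) Am'.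
by exists m0; split => //; apply: lepm_trans l0 lm'.
Qed.


Section GB.
Variables (K : fieldType) (n : nat) (I : {mpoly K[n]} -> Prop)
  (sigma : rel 'X_{1..n}).
Hypotheses (HI : is_ideal I) (HIM : forall f, I f -> inM f)
  (Hs : term_ordering sigma)
  (Hwf : well_founded (fun a b => (a != b) && sigma a b)).

Local Notation P := {mpoly K[n]}.
Local Notation mon := 'X_{1..n}.

Lemma I0 : I (0 : P). Proof. by case: HI. Qed.
Lemma ID (f g : P) : I f -> I g -> I (f + g). Proof. by case: HI => _ H _; apply: H. Qed.
Lemma IM (h f : P) : I f -> I (h * f). Proof. by case: HI => _ _ H; apply: H. Qed.
Lemma IZ c (f : P) : I f -> I (c *: f). Proof. by rewrite -mul_mpolyC; apply: IM. Qed.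
Lemma IB (f g : P) : I f -> I g -> I (f - g).
Proof. by move=> If Ig; apply: ID => //; rewrite -scaleN1r; apply: IZ. Qed.

Lemma s_refl : reflexive sigma. Proof. by case: Hs => [[]]. Qed.
Lemma s_anti : antisymmetric sigma. Proof. by case: Hs => [[]]. Qed.
Lemma s_trans : transitive sigma. Proof. by case: Hs => [[]]. Qed.
Lemma s_total : total sigma. Proof. by case: Hs => [[]]. Qed.
Lemma s_compat m1 m2 m3 : sigma m1 m2 -> sigma (m1 + m3)%MM (m2 + m3)%MM.
Proof. by case: Hs => _ [H _]; apply: H. Qed.
Lemma s_min0 m : sigma 0%MM m. Proof. by case: Hs => _ [_ H]; apply: H. Qed.

Lemma is_LTP (f : P) m : is_LT sigma f m <->
  f@_m != 0 /\ forall m', f@_m' != 0 -> sigma m' m.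
Proof.
rewrite /is_LT mcoeff_msupp; split; move=> [H1 H2]; split=> // m';
  move: (H2 m'); by rewrite mcoeff_msupp.
Qed.

Lemma LT_uniq (f : P) m1 m2 : is_LT sigma f m1 -> is_LT sigma f m2 -> m1 = m2.
Proof.
move=> [i1 H1] [i2 H2]; apply: s_anti; by rewrite (H2 _ i1) (H1 _ i2).
Qed.

Lemma seq_max (s : seq mon) : s != [::] -> exists2 m, m \in s & forall m', m' \in s -> sigma m' m.
Proof.
elim: s => // a s IH _; case: (altP (s =P [::])) => [->|ns].
  by exists a; rewrite ?inE // => m'; rewrite inE => /eqP ->; apply: s_refl.
have [m ms Hm] := IH ns.
case/orP: (s_total a m) => Ham.
  exists m; first by rewrite inE ms orbT.
  by move=> m'; rewrite inE => /orP [/eqP ->|]; [|apply: Hm].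
exists a; first by rewrite inE eqxx.
move=> m'; rewrite inE => /orP [/eqP ->|/Hm h]; first exact: s_refl.
exact: s_trans h Ham.
Qed.

Lemma LT_ex (f : P) : f != 0 -> exists m, is_LT sigma f m.
Proof.
by rewrite -msupp_eq0 => /seq_max [m ms Hm]; exists m.
Qed.

Definition LTs m := exists f : P, [/\ I f, f != 0 & is_LT sigma f m].

Lemma LTs_monic m : LTs m -> exists h, [/\ I h, h@_m = 1 & forall m', h@_m' != 0 -> sigma m' m].
Proof.
move=> [f [If nf /is_LTP [fm Hf]]].
exists ((f@_m)^-1 *: f); split; first exact: IZ.
  by rewrite mcoeffZ mulVf.
by move=> m'; rewrite mcoeffZ mulf_eq0 negb_or => /andP [_]; apply: Hf.
Qed.

Lemma LTs_up m a : LTs m -> LTs (m + a)%MM.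
Proof.
move=> [f [If nf /is_LTP [fm Hf]]].
exists (f * 'X_[a]); split.
- by rewrite mulrC; apply: IM.
- by apply/eqP => E; move: fm; rewrite -(mcoeffMX f a) E mcoeff0 eqxx.
apply/is_LTP; split; first by rewrite addmC mcoeffMX.
move=> m'; rewrite -mcoeff_msupp (perm_mem (msuppMX f a)) => /mapP [k].
rewrite mcoeff_msupp => /Hf Hk ->; rewrite ![(a + _)%MM]addmC.
exact: s_compat.
Qed.

Lemma LTs_not0 : ~ LTs 0%MM.
Proof.
by move=> [f [If nf /is_LTP [f0 Hf]]]; move: f0; rewrite (HIM If) eqxx.
Qed.

Lemma NF b (f : P) : (forall m, f@_m != 0 -> sigma m b) ->
  exists i, I i /\ forall m, (f - i)@_m != 0 -> ~ LTs m /\ sigma m b.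
Proof.
elim/(well_founded_induction Hwf): b f => b IH f Hf.
have Aux : forall f1 : P, (forall m, f1@_m != 0 -> sigma m b /\ m != b) ->
    exists i1, I i1 /\ forall m, (f1 - i1)@_m != 0 ->
      [/\ ~ LTs m, sigma m b & m != b].
  move=> f1 H1; case: (altP (f1 =P 0)) => [->|nf1].
    by exists 0; split; [exact: I0|move=> m; rewrite subr0 mcoeff0 eqxx].
  have [b' /is_LTP [b'1 Hb']] := LT_ex nf1.
  have [sb' nb'] := H1 _ b'1.
  have [i1 [Ii1 Hi1]] := IH b' (introT andP (conj nb' sb')) f1 Hb'.
  exists i1; split => // m /Hi1 [ls smb']; split => //.
    exact: s_trans smb' sb'.
  apply/eqP => E; move: smb'; rewrite E => sbb'.
  by move: nb'; rewrite (s_anti (introT andP (conj sb' sbb'))) eqxx.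
have [[Lb fb]|Hc] := pselect (LTs b /\ f@_b != 0).
  have [h [Ih h1 Hh]] := LTs_monic Lb.
  have /Aux [i1 [Ii1 Hi1]] : forall m, (f - f@_b *: h)@_m != 0 -> sigma m b /\ m != b.
    move=> m; rewrite mcoeffB mcoeffZ; case: (altP (m =P b)) => [->|nmb].
      by rewrite h1 mulr1 subrr eqxx.
    move=> H; split => //; case: (altP (f@_m =P 0)) => [fm0|]; last exact: Hf.
    by move: H; rewrite fm0 sub0r oppr_eq0 mulf_eq0 negb_or => /andP [_]; apply: Hh.
  exists (f@_b *: h + i1); split; first by apply: ID => //; apply: IZ.
  move=> m; rewrite opprD addrA => /Hi1 [? ? _]; by split.
have /Aux [i1 [Ii1 Hi1]] : forall m, (f - f@_b *: 'X_[b])@_m != 0 -> sigma m b /\ m != b.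
  move=> m; rewrite mcoeffB mcoeffZ mcoeffX; case: (altP (m =P b)) => [->|nmb].
    by rewrite eqxx mulr1 subrr eqxx.
  rewrite (eq_sym b m) (negbTE nmb) mulr0 subr0 => H; split => //; exact: Hf.
exists i1; split => // m.
have E : f - i1 = (f - f@_b *: 'X_[b] - i1) + f@_b *: 'X_[b].
  by rewrite addrAC subrK.
rewrite E mcoeffD mcoeffZ mcoeffX; case: (altP (m =P b)) => [->|nmb].
  have -> : (f - f@_b *: 'X_[b] - i1)@_b = 0.
    by apply/eqP; apply: contraT => /Hi1 [_ _]; rewrite eqxx.
  rewrite eqxx mulr1 add0r => fb; split; last exact: s_refl.
  by move=> Lb; apply: Hc.
rewrite (eq_sym b m) (negbTE nmb) mulr0 addr0 => /Hi1 [? ? _]; by split.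
Qed.

Lemma red_elt m : LTs m -> exists g : P, [/\ I g, g@_m = 1 &
  forall m', m' != m -> g@_m' != 0 -> ~ LTs m' /\ sigma m' m].
Proof.
move=> Lm; have [h [Ih h1 Hh]] := LTs_monic Lm.
have /NF [i [Ii Hi]] : forall m', (h - 'X_[m])@_m' != 0 -> sigma m' m.
  move=> m'; rewrite mcoeffB mcoeffX; case: (altP (m' =P m)) => [->|nm].
    by rewrite h1 eqxx subrr eqxx.
  rewrite (eq_sym m m') (negbTE nm) subr0; exact: Hh.
exists (h - i); split; first exact: IB.
  have E : h - i = 'X_[m] + (h - 'X_[m] - i) by rewrite [RHS]addrC addrAC subrK.
  rewrite E mcoeffD mcoeffX eqxx.
  have -> : (h - 'X_[m] - i)@_m = 0.
    by apply/eqP; apply: contraT => /Hi [].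
  by rewrite addr0.
move=> m' nm; have E : h - i = 'X_[m] + (h - 'X_[m] - i).
  by rewrite [RHS]addrC addrAC subrK.
by rewrite E mcoeffD mcoeffX (negbTE (introN eqP (fun e => (elimN eqP nm) (esym e)))) add0r => /Hi.
Qed.

Lemma GB_exists : exists Gb, in_GFan I Gb /\
  forall z, LTs U_(z)%MM -> z \in LI Gb.
Proof.
have [s Hs'] := mmin_finite LTs.
have Hex : forall m, exists g : P, LTs m -> [/\ I g, g@_m = 1 &
  forall m', m' != m -> g@_m' != 0 -> ~ LTs m' /\ sigma m' m].
  move=> m; case: (pselect (LTs m)) => [Lm|nL].
    by have [g Hg] := red_elt Lm; exists g.
  by exists 0.
have [gs Hgs] := choice Hex.
have gsLT : forall m, LTs m -> is_LT sigma (gs m) m.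
  move=> m Lm; have [_ g1 Hg] := Hgs m Lm; apply/is_LTP; rewrite g1 oner_eq0.
  split => // m'; case: (altP (m' =P m)) => [->|nm]; first by rewrite s_refl.
  by move/(Hg _ nm) => [].
pose G := seq_fset tt (map gs s).
pose Gb := seq_fset tt (map (fun m => (m, gs m)) s).
have Hsm : forall m, mmin LTs m <-> m \in s by [].
have minL : forall m, m \in s -> LTs m by move=> m /Hsm [].
have inG : forall g, g \in G -> exists2 m, m \in s & g = gs m.
  by move=> g; rewrite seq_fsetE => /mapP [m ms ->]; exists m.
have Gin : forall m, m \in s -> gs m \in G.
  by move=> m ms; rewrite seq_fsetE; apply: map_f.
exists Gb; split.
  exists sigma; split => //; exists G; split.
    split.
    - move=> g /inG [m ms ->]; have [Ig g1 _] := Hgs m (minL _ ms); split => //.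
      by apply/eqP => E; move: g1; rewrite E mcoeff0 => /eqP; rewrite eq_sym oner_eq0.
    - move=> g /inG [m ms ->]; exists m; first exact: gsLT _ (minL _ ms).
      by have [] := Hgs m (minL _ ms).
    - move=> f If nf mf Hmf.
      have [m0 [/Hsm m0s lm0]] := mmin_below (A := LTs) (ex_intro _ f (And3 If nf Hmf)).
      exists (gs m0), m0 => //; split; [exact: Gin|apply: gsLT; exact: minL].
    - move=> g g' /inG [m1 m1s ->] /inG [m2 m2s ->] ng mg' Hmg' m.
      rewrite mcoeff_msupp => gm.
      rewrite -(LT_uniq (gsLT _ (minL _ m2s)) Hmg'); apply/negP => lm.
      case: (altP (m =P m1)) => [E|nm].
        have [_ Hmin] := (Hs' m1).2 m1s.
        move: ng; rewrite (Hmin m2 (minL _ m2s)) ?eqxx //.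
        by rewrite -E.
      have [_ _ Hg3] := Hgs m1 (minL _ m1s); have [nL _] := Hg3 m nm gm.
      apply: nL; rewrite -(submK lm) addmC; apply: LTs_up; exact: minL.
  move=> p; rewrite seq_fsetE; split.
    by case/mapP => m ms -> /=; split; [apply: Gin|apply: gsLT; apply: minL].
  case: p => m g /= [/inG [m' m's ->] Hl].
  rewrite -(LT_uniq (gsLT _ (minL _ m's)) Hl); exact: (map_f (fun m => (m, gs m))).
move=> z Lz.
have [m0 [/Hsm m0s lm0]] := mmin_below Lz.
have Hi : forall i, i != z -> m0 i = 0%N.
  move=> i nz; move/mnm_lepP: lm0 => /(_ i); rewrite mnm1E (negbTE (introN eqP (fun e => (elimN eqP nz) (esym e)))).
  by rewrite leqn0 => /eqP.
have Hz : m0 z = 1%N.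
  have Hle : (m0 z <= 1)%N by move/mnm_lepP: lm0 => /(_ z); rewrite mnm1E eqxx.
  case E0: (m0 z) Hle => [|[|k]] // _.
  exfalso; apply: LTs_not0; have <- : m0 = 0%MM.
    apply/mnmP => i; rewrite mnm0E; case: (altP (i =P z)) => [->//|]; exact: Hi.
  exact: minL.
have E : m0 = U_(z)%MM.
  apply/mnmP => i; rewrite mnm1E; case: (altP (i =P z)) => [->|nz].
    by rewrite Hz eqxx.
  by rewrite Hi // eq_sym (negbTE nz).
rewrite /LI inE; apply/asboolP; exists (m0, gs m0); last by rewrite E.
by rewrite seq_fsetE; apply: (map_f (fun m => (m, gs m))).
Qed.
End GB.


Section Main.
Variables (K : fieldType) (n : nat).
Local Notation P := {mpoly K[n]}.
Local Notation mon := 'X_{1..n}.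

Lemma notin_indets (f : P) z : (forall m, f@_m != 0 -> m z = 0%N) -> z \notin indets f.
Proof.
move=> H; rewrite /indets inE; apply/asboolP => -[m].
by rewrite mcoeff_msupp => /H ->.
Qed.

Lemma in_indets (f : P) z m : z \notin indets f -> f@_m != 0 -> m z = 0%N.
Proof.
rewrite /indets inE => /asboolP Hn fm; apply/eqP; rewrite -leqn0 leqNgt.
by apply/negP => mz; apply: Hn; exists m; rewrite ?mcoeff_msupp.
Qed.

Lemma U_le (z : 'I_n) (m : mon) : (0 < m z)%N -> (U_(z) <= m)%MM.
Proof.
by move=> mz; apply/mnm_lepP => i; rewrite mnm1E; case: (altP (z =P i)) => [<-//|_].
Qed.

Lemma LT_var sigma (Hs : term_ordering sigma) (f : P) z m :
  is_LT sigma f U_(z)%MM -> f@_m != 0 -> m != U_(z)%MM -> m z = 0%N.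
Proof.
move=> /is_LTP [_ Hf] fm nm; apply/eqP; rewrite -leqn0 leqNgt; apply/negP => mz.
have lm := U_le mz.
have s1 : sigma U_(z)%MM m.
  rewrite -(submK lm); rewrite -{1}[U_(z)%MM]add0m.
  by case: Hs => _ [Hc H0]; apply: Hc; apply: H0.
have := Hf _ fm => s2.
case: Hs => [[_ Ha _ _] _]; by move: nm; rewrite (Ha _ _ (introT andP (conj s2 s1))) eqxx.
Qed.

Lemma coh_LI (I : P -> Prop) (HIM : forall f, I f -> inM f) Gb :
  in_GFan I Gb -> has_coh_sep I (LI Gb).
Proof.
move=> [sigma [Hs [G [[G1 G2 G3 G4] HGb]]]].
have Hex : forall z, exists g : P, z \in LI Gb -> (U_(z)%MM, g) \in Gb.
  move=> z; case: (pselect (z \in LI Gb)) => [zL|]; last by exists 0.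
  move: zL; rewrite /LI inE => /asboolP [[m g] pG /= <-]; by exists g.
have [F HF] := choice Hex.
have HF2 : forall z, z \in LI Gb -> F z \in G /\ is_LT sigma (F z) U_(z)%MM.
  by move=> z /HF /HGb.
have HF1 : forall z, z \in LI Gb -> (F z)@_U_(z) = 1.
  move=> z /HF2 [FG Hl]; have [m Hm F1] := G2 _ FG.
  by rewrite -(LT_uniq Hs Hm Hl).
exists F => z zL; have [FG Hl] := HF2 z zL; have [IF nF] := G1 _ FG.
split => //; first exact: HIM.
- split; first exact: HIM.
  + by rewrite /lincoef HF1 // oner_eq0.
  apply: notin_indets => m; rewrite /tail /lincoef HF1 // invr1 scale1r.
  rewrite mcoeffB mcoeffX; case: (altP (m =P U_(z)%MM)) => [->|nm].
    by rewrite eqxx HF1 // subrr eqxx.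
  rewrite (negbTE (introN eqP (fun e => (elimN eqP nm) (esym e)))) sub0r oppr_eq0 => Fm.
  exact: (@LT_var sigma Hs (F z) z m Hl Fm nm).
move=> z' z'L nz; apply: notin_indets => m Fm.
have [FG' Hl'] := HF2 z' z'L.
have nzz : U_(z)%MM != U_(z')%MM.
  apply/eqP => /mnmP /(_ z); rewrite !mnm1E eqxx.
  by move: nz; case: eqP.
have ng : F z' != F z.
  apply/eqP => E; move: Hl'; rewrite E => Hl2.
  by move: nzz; rewrite (LT_uniq Hs Hl Hl2) eqxx.
have := G4 _ _ FG' FG ng _ Hl m; rewrite mcoeff_msupp => /(_ Fm) H.
apply/eqP; rewrite -leqn0 leqNgt; apply: contra H; exact: U_le.
Qed.


Definition wt (N : nat) (Z : {set 'I_n}) (m : mon) : nat :=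
  (N * (\sum_(i in Z) m i) + mdeg m)%N.

Definition sgZ N Z : rel mon := fun m1 m2 =>
  (wt N Z m1 < wt N Z m2)%N || ((wt N Z m1 == wt N Z m2) && (m1 <= m2)%O).

Lemma wtD N Z m1 m2 : wt N Z (m1 + m2)%MM = (wt N Z m1 + wt N Z m2)%N.
Proof.
rewrite /wt mdegD.
have -> : (\sum_(i in Z) (m1 + m2)%MM i = \sum_(i in Z) m1 i + \sum_(i in Z) m2 i)%N.
  by rewrite -big_split /=; apply: eq_bigr => i _; rewrite mnmDE.
by rewrite mulnDr addnACA.
Qed.

Lemma sgZ_term N Z : term_ordering (sgZ N Z).
Proof.
split; [split|split].
- by move=> m; rewrite /sgZ eqxx lexx orbT.
- move=> m1 m2 /andP []; rewrite /sgZ.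
  case: (ltngtP (wt N Z m1) (wt N Z m2)) => //= _ h1 h2.
  by apply: le_anti; rewrite h1 h2.
- move=> m2 m1 m3; rewrite /sgZ.
  case: (ltngtP (wt N Z m1) (wt N Z m2)) => h12 //= H12;
  case: (ltngtP (wt N Z m2) (wt N Z m3)) => h23 //= H23.
  + by rewrite (ltn_trans h12 h23).
  + by rewrite -h23 h12.
  + by rewrite h12 h23.
  + by rewrite h12 h23 ltnn eqxx (le_trans H12 H23) orbT.
- move=> m1 m2; rewrite /sgZ.
  case: (ltngtP (wt N Z m1) (wt N Z m2)) => //= _; exact: le_total.
- move=> m1 m2 m3; rewrite /sgZ !wtD ltn_add2r eqn_add2r lemc_add2l; by [].
- move=> m; rewrite /sgZ; have -> : wt N Z 0%MM = 0%N.
    by rewrite /wt mdeg0 big1 ?muln0 // => i _; rewrite mnm0E.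
  case: (posnP (wt N Z m)) => [->|h]; last by apply/orP; left.
  by have := lemc_addr 0%MM m; rewrite add0m => ->.
Qed.

Lemma sgZ_wf N Z : well_founded (fun a b => (a != b) && sgZ N Z a b).
Proof.
set R := fun a b => _.
have H : forall k m, (wt N Z m <= k)%N -> Acc R m.
  elim=> [|k IHk] m; elim/(well_founded_induction (@ltom_wf n)): m => m IHm hm;
    constructor => m' /andP [nm' /orP [lw|/andP [/eqP ew lm]]].
  - by move: (leq_trans lw hm).
  - apply: IHm; first by rewrite lt_def (eq_sym m m') nm' lm.
    by rewrite ew.
  - by apply: IHk; rewrite -ltnS (leq_trans lw hm).
  - apply: IHm; first by rewrite lt_def (eq_sym m m') nm' lm.
    by rewrite ew.
by move=> m; apply: (H _ m (leqnn _)).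
Qed.

Lemma coh_le_maxLI (I : P -> Prop) (HI : is_ideal I)
  (HIM : forall f, I f -> inM f) Z : has_coh_sep I Z -> (#|Z| <= maxLI I)%N.
Proof.
move=> [F HF].
pose N := (\sum_(z in Z) msize (F z))%N.
have HN : forall z, z \in Z -> (msize (F z) <= N)%N.
  by move=> z zZ; rewrite /N (bigD1 z) //= leq_addr.
have LTz : forall z, z \in Z -> is_LT (sgZ N Z) (F z) U_(z)%MM.
  move=> z zZ; have [nF _ IF [_ lc nz] coh] := HF z zZ.
  apply/is_LTP; split; first exact: lc.
  move=> m Fm; case: (altP (m =P U_(z)%MM)) => [->|nm].
    by rewrite /sgZ eqxx lexx orbT.
  have H0 : forall i, i \in Z -> m i = 0%N.
    move=> i iZ; case: (altP (i =P z)) => [->|niz].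
      apply: (in_indets nz); rewrite /tail mcoeffB mcoeffZ mcoeffX.
      rewrite (negbTE (introN eqP (fun e => (elimN eqP nm) (esym e)))) sub0r.
      by rewrite oppr_eq0 mulf_eq0 invr_eq0 negb_or lc Fm.
    have [_ _ _ _ coh_i] := HF i iZ.
    exact: in_indets (coh_i z zZ (introN eqP (fun e => (elimN eqP niz) (esym e)))) Fm.
  have wm : wt N Z m = mdeg m by rewrite /wt big1 ?muln0.
  have wU : wt N Z U_(z)%MM = N.+1.
    rewrite /wt mdeg1 (bigD1 z) //= mnm1E eqxx big1 ?addn0 ?muln1 ?addn1 //.
    by move=> i /andP [_ niz]; rewrite mnm1E (negbTE (introN eqP (fun e => (elimN eqP niz) (esym e)))).
  rewrite /sgZ wm wU; apply/orP; left; rewrite ltnS.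
  apply: leq_trans (HN z zZ); apply: ltnW; apply: msize_mdeg_lt.
  by rewrite mcoeff_msupp.
have [Gb [HGb HLI]] := GB_exists HI HIM (sgZ_term N Z) (sgZ_wf N Z).
have sub : Z \subset LI Gb.
  apply/subsetP => z zZ; apply: HLI; exists (F z).
  by have [nF _ IF _ _] := HF z zZ; split => //; apply: LTz.
apply: leq_trans (subset_leq_card sub) _.
rewrite /maxLI; apply: (leq_bigmax_cond (F := fun S : {set 'I_n} => #|S|)).
by apply/asboolP; exists Gb.
Qed.

End Main.

Theorem proposition3p6 (K : fieldType) (n : nat) (I : {mpoly K[n]} -> Prop)
    (HI : is_ideal I) (HIM : forall f, I f -> inM f) :
  (forall Gb, in_GFan I Gb -> (sepdim I <= n - #|LI Gb|)%N) /\
  (forall Gb, in_GFan I Gb ->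
     (sepdim I = (n - #|LI Gb|)%N <-> #|LI Gb| = maxLI I)) /\
  (forall Gb, in_GFan I Gb -> #|LI Gb| = maxLI I -> optimal_sep I (LI Gb)).
Proof.
pose M := (\max_(Z : {set 'I_n} | `[< has_coh_sep I Z >]) #|Z|)%N.
have LIM : forall Gb, in_GFan I Gb -> (#|LI Gb| <= M)%N.
  move=> Gb HG; apply: (leq_bigmax_cond (F := fun S : {set 'I_n} => #|S|)).
  by apply/asboolP; apply: coh_LI HG.
have EM : maxLI I = M.
  apply/eqP; rewrite eqn_leq; apply/andP; split.
    by apply/bigmax_leqP => S /asboolP [Gb [HG <-]]; apply: LIM.
  by apply/bigmax_leqP => Z /asboolP H; apply: coh_le_maxLI.
have Mn : (M <= n)%N.
  by apply/bigmax_leqP => Z _; have := max_card Z; rewrite card_ord.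
have Sd : sepdim I = (n - M)%N by [].
split; last split.
- by move=> Gb HG; rewrite Sd leq_sub2l // LIM.
- move=> Gb HG; rewrite Sd EM; have := LIM Gb HG; split => [E|->] //.
  move: E Mn H; clear; move: (#|LI Gb|) M => a b; lia.
- move=> Gb HG E; split; first exact: coh_LI HG.
  by move=> Z' HZ; rewrite E; apply: coh_le_maxLI.
Qed.
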